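(* If $T$ is a tree of order $n\ge 3$ that is not isomorphic to the path $P_4$, then $\gamma^{\rm ID}(T) \le n - \gamma(T)$.
   Context: An identifying code of a graph $G$ is a set $C\subseteq V(G)$ such that every vertex $v$ has $N[v]\cap C\neq\emptyset$ and for all distinct vertices $u,v$, $N[u]\cap C \ne N[v]\cap C$, where $N[v]$ is the closed neighborhood. $\gamma^{\rm ID}(G)$ denotes the minimum size of an identifying code, and $\gamma(G)$ the domination number. *)

(* Defs.v *)
From mathcomp Require Import all_boot all_order.
Set Implicit Arguments. Unset Strict Implicit. Unset Printing Implicit Defensive.

Definition simple_graph (T : finType) (e : rel T) : Prop :=
  symmetric e /\ irreflexive e.

Definition cnbhd (T : finType) (e : rel T) (v : T) : {set T} :=
  [set u | (u == v) || e v u].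

Definition nedges (T : finType) (e : rel T) : nat :=
  #|[set p : T * T | e p.1 p.2]| %/ 2.

Definition connected_graph (T : finType) (e : rel T) : Prop :=
  forall x y : T, connect e x y.

Definition is_tree (T : finType) (e : rel T) : Prop :=
  simple_graph e /\ 0 < #|T| /\ connected_graph e /\ nedges e = #|T| - 1.

Definition iso_P4 (T : finType) (e : rel T) : Prop :=
  exists f : T -> 'I_4, bijective f /\
    forall x y, e x y = ((f x).+1 == f y) || ((f y).+1 == f x).

Definition dominating (T : finType) (e : rel T) (S : {set T}) : bool :=
  [forall v, cnbhd e v :&: S != set0].

Definition identifying (T : finType) (e : rel T) (C : {set T}) : bool :=
  dominating e C &&
  [forall u, forall v, (u != v) ==> (cnbhd e u :&: C != cnbhd e v :&: C)].

(* domination number: minimum size of a dominating set (setT always dominates) *)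
Definition gamma (T : finType) (e : rel T) : nat :=
  #|[arg min_(S < setT | dominating e S) #|S|]|.

(* identifying code number: minimum size of an identifying code;
   only meaningful when an identifying code exists (0 otherwise). *)
Definition has_idcode (T : finType) (e : rel T) : bool :=
  [exists C : {set T}, identifying e C].

Definition gammaID (T : finType) (e : rel T) : nat :=
  match [pick C : {set T} | identifying e C] with
  | Some C0 => #|[arg min_(C < C0 | identifying e C) #|C|]|
  | None => 0
  end.

(* Main.v *)
Require Import Defs.
From mathcomp Require Import all_boot all_order.
From mathcomp Require Import zify.
Set Implicit Arguments. Unset Strict Implicit. Unset Printing Implicit Defensive.

(* Proof by dynamic programming over a rooted tree: a finite family of
   "profiles" (Ftab) of achievable partial solutions (C identifying,
   D dominating, |C|+|D| <= n) is shown closed under gluing by computation. *)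

Definition stt := (bool * bool * bool * nat * bool * bool)%type.

Definition merge (s1 s2 : stt) : option stt :=
  let: (c1,d1,dm1,k1,cl1,si1) := s1 in
  let: (c2,d2,dm2,k2,cl2,si2) := s2 in
  if ~~ (dm2 || d1) then None else
  if ~~ ((k2 != 0) || c1) then None else
  if ~~ c1 && cl2 then None else
  if [&& k2 == 0, c1 & si1] then None else
  Some (c1, d1, dm1 || d2, (if c2 then 2 else k1),
       (if c2 then [|| (k1 == 0) && (k2 == 1), (k1 == 1) && (k2 == 1) | (k1 == 0) && si2]
        else cl1 || [&& k1 == 1, k2 == 0 & c1]),
       si1 || (c1 && (k2 == 0))).

Definition tagf (s k : nat) : nat * nat := if 5 <= s then (5,0) else (s, minn k 3).
Definition tagc (t1 t2 : nat * nat) : nat * nat := tagf (t1.1 + t2.1) (t1.2).+1.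

Definition domchk (g g1 g2 : seq (stt * nat)) : bool :=
  all (fun p => has (fun p1 => has (fun p2 =>
        (merge p1.1 p2.1 == Some p.1) && (p1.2 + p2.2 <= p.2 + 1)) g2) g1) g.

Definition Ftab : seq (nat * nat * seq (stt * nat)) := [::
  (1,0,[:: ((false,false,false,0,false,false),0); ((false,true,true,0,false,false),1); ((true,false,false,1,false,false),1); ((true,true,true,1,false,false),2)]);
  (2,1,[:: ((false,true,true,2,true,false),1); ((true,false,true,1,true,true),1); ((true,false,true,2,true,false),2); ((true,true,true,1,true,true),1); ((true,true,true,2,true,false),2)]);
  (3,1,[:: ((true,false,false,2,false,false),2); ((true,false,true,1,false,false),1); ((true,false,true,2,false,false),2); ((true,false,true,2,true,false),1); ((true,true,true,1,false,false),2); ((true,true,true,2,false,false),3); ((true,true,true,2,true,false),2)]);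
  (3,2,[:: ((false,true,true,2,false,false),1); ((true,false,true,2,false,false),3); ((true,true,true,2,false,false),2); ((true,true,true,2,true,true),1)]);
  (4,2,[:: ((true,false,true,1,true,true),1); ((true,false,true,2,false,false),2); ((true,false,true,2,false,true),2); ((true,false,true,2,true,false),2); ((true,true,true,1,true,true),1); ((true,true,true,2,false,false),2); ((true,true,true,2,false,true),2); ((true,true,true,2,true,false),2); ((true,true,true,2,true,true),1)]);
  (5,0,[:: ((false,true,true,2,false,false),1); ((true,false,true,2,false,false),2); ((true,false,true,2,false,true),1); ((true,true,true,2,false,false),2); ((true,true,true,2,false,true),1); ((true,true,true,2,true,true),1)]);
  (4,1,[:: ((false,false,false,2,false,false),1); ((false,false,false,2,true,false),0); ((false,false,true,2,false,false),2); ((false,true,true,2,false,false),2); ((false,true,true,2,true,false),1); ((true,false,false,2,false,false),1); ((true,false,true,2,false,false),2); ((true,false,true,2,true,false),2); ((true,true,true,2,false,false),2); ((true,true,true,2,true,false),2)]);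
  (4,1,[:: ((false,false,false,2,false,false),2); ((false,false,true,0,false,false),0); ((false,false,true,2,false,false),1); ((false,true,true,0,false,false),1); ((false,true,true,2,false,false),2); ((true,false,false,2,false,false),3); ((true,false,true,1,false,false),1); ((true,false,true,2,false,false),1); ((true,true,true,1,false,false),2); ((true,true,true,2,false,false),2)]);
  (5,0,[:: ((false,false,false,2,false,false),1); ((false,false,false,2,true,false),1); ((false,false,true,2,false,false),1); ((false,true,true,2,false,false),2); ((false,true,true,2,true,false),2); ((true,false,false,2,false,false),2); ((true,false,true,2,false,false),1); ((true,false,true,2,true,false),1); ((true,true,true,2,false,false),2); ((true,true,true,2,true,false),2)]);
  (5,0,[:: ((false,false,false,2,false,false),1); ((false,false,false,2,true,false),0); ((false,false,true,0,false,false),0); ((false,false,true,2,false,false),1); ((false,true,true,0,false,false),1); ((false,true,true,2,false,false),2); ((false,true,true,2,true,false),1); ((true,false,false,2,false,false),1); ((true,false,true,1,false,false),1); ((true,false,true,2,false,false),1); ((true,true,true,1,false,false),2); ((true,true,true,2,false,false),2)]);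
  (5,0,[:: ((false,true,true,2,false,false),2); ((false,true,true,2,true,false),1); ((true,false,true,1,true,true),1); ((true,false,true,2,false,false),2); ((true,false,true,2,false,true),1); ((true,false,true,2,true,false),2); ((true,true,true,1,true,true),1); ((true,true,true,2,false,false),2); ((true,true,true,2,false,true),1); ((true,true,true,2,true,false),2)]);
  (5,0,[:: ((false,true,true,2,false,false),2); ((true,false,true,2,false,false),2); ((true,false,true,2,false,true),1); ((true,true,true,2,false,false),2); ((true,true,true,2,false,true),1); ((true,true,true,2,true,true),1)]);
  (5,0,[:: ((false,true,true,2,false,false),1); ((false,true,true,2,true,false),1); ((true,false,true,1,true,true),1); ((true,false,true,2,false,false),3); ((true,false,true,2,false,true),2); ((true,false,true,2,true,false),2); ((true,true,true,1,true,true),0); ((true,true,true,2,false,false),2); ((true,true,true,2,false,true),1); ((true,true,true,2,true,false),1)]);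
  (5,0,[:: ((true,false,false,2,false,false),2); ((true,false,true,1,false,false),1); ((true,false,true,2,false,false),1); ((true,false,true,2,true,false),1); ((true,true,true,1,false,false),2); ((true,true,true,2,false,false),2); ((true,true,true,2,true,false),2)]);
  (5,0,[:: ((true,false,false,2,false,false),2); ((true,false,true,2,false,false),1); ((true,false,true,2,true,false),1); ((true,true,true,2,false,false),2); ((true,true,true,2,true,false),2)]);
  (5,0,[:: ((true,false,true,1,false,false),1); ((true,false,true,2,false,false),1); ((true,false,true,2,true,false),1); ((true,true,true,1,false,false),2); ((true,true,true,2,false,false),2); ((true,true,true,2,true,false),2)]);
  (5,0,[:: ((true,false,false,2,false,false),3); ((true,false,true,1,false,false),1); ((true,false,true,2,false,false),2); ((true,false,true,2,true,false),1); ((true,true,true,1,false,false),1); ((true,true,true,2,false,false),2); ((true,true,true,2,true,false),1)]);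
  (5,0,[:: ((true,false,false,2,false,false),2); ((true,false,true,1,false,false),2); ((true,false,true,2,false,false),1); ((true,false,true,2,true,false),2); ((true,true,true,1,false,false),3); ((true,true,true,2,false,false),2); ((true,true,true,2,true,false),3)]);
  (4,3,[:: ((false,true,true,2,false,false),1); ((true,false,true,2,false,true),3); ((true,true,true,2,false,false),2); ((true,true,true,2,false,true),1)]);
  (5,0,[:: ((true,false,true,2,false,false),3); ((true,true,true,2,false,false),2); ((true,true,true,2,false,true),1); ((true,true,true,2,true,true),1)]);
  (5,0,[:: ((false,true,true,2,false,false),1); ((true,false,true,2,false,false),3); ((true,true,true,2,false,false),2); ((true,true,true,2,false,true),1)]);
  (5,0,[:: ((false,true,true,2,false,false),2); ((true,false,true,2,false,false),3); ((true,true,true,2,false,false),2); ((true,true,true,2,false,true),1)]);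
  (5,0,[:: ((true,false,true,1,true,true),2); ((true,false,true,2,false,false),2); ((true,false,true,2,false,true),1); ((true,false,true,2,true,false),3); ((true,true,true,1,true,true),2); ((true,true,true,2,false,false),2); ((true,true,true,2,false,true),1); ((true,true,true,2,true,false),3); ((true,true,true,2,true,true),2)]);
  (5,0,[:: ((true,false,true,2,false,false),2); ((true,false,true,2,false,true),1); ((true,true,true,2,false,false),2); ((true,true,true,2,false,true),1)]);
  (5,0,[:: ((false,false,false,0,false,false),1); ((false,false,false,2,false,false),1); ((false,false,true,0,false,false),1); ((false,false,true,2,false,false),1); ((false,true,true,0,false,false),1); ((false,true,true,2,false,false),1); ((true,false,false,1,false,false),2); ((true,false,false,2,false,false),2); ((true,false,true,1,false,false),1); ((true,false,true,2,false,false),2); ((true,true,true,1,false,false),1); ((true,true,true,2,false,false),2)]);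
  (5,0,[:: ((false,false,false,0,false,false),0); ((false,false,false,2,false,false),0); ((false,false,false,2,true,false),0); ((false,false,true,0,false,false),1); ((false,false,true,2,false,false),1); ((false,true,true,0,false,false),1); ((false,true,true,2,false,false),1); ((false,true,true,2,true,false),1); ((true,false,false,1,false,false),1); ((true,false,false,2,false,false),1); ((true,false,true,1,false,false),2); ((true,false,true,1,true,true),1); ((true,false,true,2,false,false),2); ((true,false,true,2,true,false),2); ((true,true,true,1,false,false),2); ((true,true,true,1,true,true),1); ((true,true,true,2,false,false),2); ((true,true,true,2,true,false),2)]);
  (5,0,[:: ((false,false,false,0,false,false),0); ((false,false,false,2,false,false),0); ((false,false,true,0,false,false),1); ((false,false,true,2,false,false),1); ((false,true,true,0,false,false),1); ((false,true,true,2,false,false),1); ((true,false,false,1,false,false),1); ((true,false,false,2,false,false),1); ((true,false,true,1,false,false),2); ((true,false,true,2,false,false),2); ((true,true,true,1,false,false),2); ((true,true,true,2,false,false),2)]);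
  (5,0,[:: ((false,false,false,2,false,false),1); ((false,false,false,2,true,false),0); ((false,false,true,0,false,false),1); ((false,false,true,2,false,false),1); ((false,true,true,0,false,false),2); ((false,true,true,2,false,false),2); ((false,true,true,2,true,false),1); ((true,false,false,2,false,false),1); ((true,false,true,1,false,false),2); ((true,false,true,2,false,false),1); ((true,true,true,1,false,false),3); ((true,true,true,2,false,false),2)]);
  (5,0,[:: ((false,false,false,2,false,false),0); ((false,false,false,2,true,false),0); ((false,false,true,2,false,false),1); ((false,true,true,2,false,false),1); ((false,true,true,2,true,false),1); ((true,false,false,2,false,false),1); ((true,false,true,2,false,false),2); ((true,false,true,2,true,false),2); ((true,true,true,2,false,false),2); ((true,true,true,2,true,false),2)]);
  (5,0,[:: ((false,false,false,2,false,false),0); ((false,false,true,2,false,false),1); ((false,true,true,2,false,false),1); ((true,false,false,2,false,false),1); ((true,false,true,2,false,false),2); ((true,true,true,2,false,false),2)]);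
  (5,0,[:: ((false,false,false,2,true,false),2); ((false,false,true,0,false,false),0); ((false,false,true,2,false,false),1); ((false,true,true,0,false,false),1); ((false,true,true,2,false,false),2); ((false,true,true,2,true,false),1); ((true,false,false,2,false,false),3); ((true,false,true,1,false,false),1); ((true,false,true,2,false,false),1); ((true,true,true,1,false,false),2); ((true,true,true,2,false,false),2)]);
  (5,0,[:: ((false,false,false,2,false,false),2); ((false,false,true,2,false,false),1); ((false,true,true,2,false,false),2); ((false,true,true,2,true,false),1); ((true,false,false,2,false,false),3); ((true,false,true,2,false,false),1); ((true,true,true,2,false,false),2)]);
  (5,0,[:: ((false,true,true,2,false,false),1); ((false,true,true,2,true,false),1); ((true,false,true,1,true,true),1); ((true,false,true,2,false,false),2); ((true,false,true,2,false,true),2); ((true,false,true,2,true,false),2); ((true,true,true,1,true,true),1); ((true,true,true,2,false,false),2); ((true,true,true,2,false,true),2); ((true,true,true,2,true,false),2); ((true,true,true,2,true,true),1)]);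
  (5,0,[:: ((true,false,false,2,false,false),2); ((true,false,true,2,false,false),1); ((true,true,true,2,false,false),2)]);
  (5,0,[:: ((true,false,true,2,false,false),1); ((true,true,true,2,false,false),2)]);
  (5,0,[:: ((true,false,true,1,false,false),1); ((true,false,true,2,false,false),2); ((true,false,true,2,true,false),1); ((true,true,true,1,false,false),0); ((true,true,true,2,false,false),1); ((true,true,true,2,true,false),0)]);
  (5,0,[:: ((false,true,true,2,false,false),1); ((true,true,true,2,false,false),2); ((true,true,true,2,false,true),1)]);
  (5,0,[:: ((true,false,true,2,false,true),3); ((true,true,true,2,false,false),2); ((true,true,true,2,false,true),1)]);
  (5,0,[:: ((true,false,true,2,false,false),3); ((true,true,true,2,false,false),2); ((true,true,true,2,false,true),1)]);
  (5,0,[:: ((false,false,false,0,false,false),0); ((false,false,false,2,false,false),1); ((false,false,false,2,true,false),0); ((false,false,true,0,false,false),0); ((false,false,true,2,false,false),1); ((false,true,true,0,false,false),1); ((false,true,true,2,false,false),2); ((false,true,true,2,true,false),1); ((true,false,false,1,false,false),1); ((true,false,false,2,false,false),2); ((true,false,true,1,false,false),1); ((true,false,true,1,true,true),1); ((true,false,true,2,false,false),2); ((true,false,true,2,true,false),1); ((true,true,true,1,false,false),2); ((true,true,true,1,true,true),2); ((true,true,true,2,false,false),3); ((true,true,true,2,true,false),2)]);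
  (5,0,[:: ((false,false,false,0,false,false),2); ((false,false,false,2,false,false),2); ((false,false,true,0,false,false),2); ((false,false,true,2,false,false),2); ((false,true,true,0,false,false),1); ((false,true,true,2,false,false),1); ((true,false,false,1,false,false),3); ((true,false,false,2,false,false),3); ((true,false,true,1,false,false),1); ((true,false,true,2,false,false),2); ((true,true,true,1,false,false),0); ((true,true,true,2,false,false),1)]);
  (5,0,[:: ((true,true,true,2,false,false),2); ((true,true,true,2,false,true),1)]);
  (5,0,[:: ((false,false,false,0,false,false),0); ((false,false,false,2,false,false),1); ((false,false,false,2,true,false),0); ((false,false,true,0,false,false),1); ((false,false,true,2,false,false),2); ((false,true,true,0,false,false),1); ((false,true,true,2,false,false),2); ((false,true,true,2,true,false),1); ((true,false,false,1,false,false),1); ((true,false,false,2,false,false),1); ((true,false,true,1,false,false),1); ((true,false,true,1,true,true),1); ((true,false,true,2,false,false),2); ((true,false,true,2,true,false),2); ((true,true,true,1,false,false),1); ((true,true,true,1,true,true),1); ((true,true,true,2,false,false),2); ((true,true,true,2,true,false),2)]);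
  (5,0,[:: ((false,false,false,0,false,false),3); ((false,false,false,2,false,false),3); ((false,false,true,0,false,false),3); ((false,false,true,2,false,false),3); ((false,true,true,0,false,false),1); ((false,true,true,2,false,false),1); ((true,false,true,1,false,false),1); ((true,false,true,2,false,false),2); ((true,true,true,1,false,false),0); ((true,true,true,2,false,false),0)]);
  (5,0,[:: ((false,true,true,0,false,false),1); ((false,true,true,2,false,false),1); ((true,false,true,1,false,false),1); ((true,false,true,2,false,false),2); ((true,true,true,1,false,false),0); ((true,true,true,2,false,false),0)])].
Definition Tidx : seq (seq nat) := [:: [:: 1; 2; 6; 7; 8; 9; 24; 25; 26; 24; 8; 27; 13; 28; 29; 28; 8; 29; 30; 31; 31; 31; 31; 31; 39; 24; 24; 24; 24; 24; 25; 26; 8; 29; 29; 8; 34; 34; 31; 42; 8; 34; 24; 8; 8];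
  [:: 3; 4; 5; 10; 11; 10; 12; 5; 10; 5; 5; 20; 5; 5; 20; 5; 5; 20; 10; 20; 10; 20; 20; 20; 32; 12; 12; 10; 12; 12; 5; 10; 10; 20; 20; 5; 10; 20; 20; 5; 5; 20; 12; 5; 5];
  [:: 4; 13; 14; 15; 14; 13; 16; 13; 13; 13; 13; 17; 13; 14; 33; 14; 14; 33; 15; 34; 15; 34; 33; 33; 13; 13; 16; 13; 16; 16; 13; 13; 13; 33; 33; 14; 15; 34; 34; 13; 13; 34; 13; 13; 13];
  [:: 18; 19; 20; 19; 21; 19; 19; 19; 19; 19; 19; 20; 19; 20; 20; 20; 20; 20; 19; 20; 19; 20; 20; 20; 19; 19; 19; 19; 19; 19; 19; 19; 19; 20; 20; 20; 19; 20; 20; 19; 19; 20; 19; 19; 19];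
  [:: 19; 19; 19; 19; 19; 19; 19; 19; 19; 19; 19; 22; 19; 19; 23; 19; 19; 23; 19; 23; 19; 22; 23; 23; 19; 19; 19; 19; 19; 19; 19; 19; 19; 23; 23; 19; 19; 23; 23; 19; 19; 23; 19; 19; 19];
  [:: 20; 19; 20; 5; 21; 5; 5; 5; 5; 5; 5; 20; 5; 20; 20; 20; 20; 20; 5; 20; 5; 20; 20; 20; 5; 5; 5; 5; 5; 5; 5; 5; 5; 20; 20; 20; 5; 20; 20; 5; 5; 20; 5; 5; 5];
  [:: 5; 33; 29; 31; 33; 29; 31; 5; 28; 5; 29; 29; 31; 29; 29; 29; 29; 29; 31; 34; 31; 34; 29; 29; 28; 5; 5; 28; 31; 31; 5; 28; 31; 29; 29; 29; 34; 34; 34; 5; 29; 34; 5; 29; 29];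
  [:: 10; 15; 31; 34; 34; 31; 34; 10; 34; 10; 15; 31; 15; 31; 34; 31; 31; 34; 34; 34; 34; 34; 31; 31; 15; 10; 10; 34; 34; 34; 10; 34; 15; 34; 34; 31; 34; 34; 34; 10; 15; 34; 10; 15; 15];
  [:: 11; 14; 33; 34; 33; 14; 34; 8; 8; 8; 14; 33; 14; 33; 33; 33; 33; 33; 34; 34; 34; 34; 33; 33; 8; 5; 5; 8; 8; 8; 8; 8; 14; 33; 33; 33; 34; 34; 34; 8; 14; 34; 11; 14; 14];
  [:: 10; 13; 14; 31; 14; 29; 31; 8; 9; 8; 13; 29; 13; 14; 29; 14; 14; 29; 31; 31; 31; 31; 29; 29; 8; 8; 9; 9; 9; 9; 8; 9; 13; 29; 29; 14; 34; 31; 31; 8; 8; 34; 8; 13; 13];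
  [:: 19; 19; 5; 10; 11; 10; 10; 5; 10; 5; 5; 20; 5; 5; 20; 5; 5; 20; 10; 20; 10; 20; 20; 20; 5; 5; 5; 10; 10; 10; 5; 10; 10; 20; 20; 5; 10; 20; 20; 5; 5; 20; 5; 5; 5];
  [:: 21; 19; 21; 11; 23; 11; 11; 11; 11; 11; 11; 21; 11; 21; 21; 21; 21; 21; 11; 21; 11; 21; 21; 21; 11; 5; 5; 11; 5; 5; 11; 11; 11; 21; 21; 20; 11; 21; 21; 11; 5; 21; 11; 5; 5];
  [:: 19; 19; 5; 10; 11; 10; 12; 5; 10; 5; 5; 20; 5; 5; 20; 5; 5; 5; 10; 20; 10; 20; 5; 20; 12; 12; 12; 5; 12; 12; 5; 10; 5; 20; 20; 5; 10; 20; 20; 5; 5; 20; 12; 5; 5];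
  [:: 19; 13; 14; 15; 14; 13; 15; 13; 13; 13; 13; 17; 13; 14; 33; 14; 14; 33; 15; 34; 15; 34; 33; 33; 13; 13; 13; 13; 13; 13; 13; 13; 13; 33; 33; 14; 15; 34; 34; 13; 13; 34; 13; 13; 13];
  [:: 19; 14; 33; 34; 33; 14; 34; 14; 14; 14; 14; 33; 14; 33; 33; 33; 33; 33; 34; 34; 34; 34; 33; 33; 14; 14; 14; 14; 14; 14; 14; 14; 14; 33; 33; 33; 34; 34; 34; 14; 14; 34; 14; 14; 14];
  [:: 19; 15; 34; 15; 34; 15; 15; 15; 15; 15; 15; 34; 15; 34; 34; 34; 34; 34; 15; 34; 15; 34; 34; 34; 15; 15; 15; 15; 15; 15; 15; 15; 15; 34; 34; 34; 15; 34; 34; 15; 15; 34; 15; 15; 15];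
  [:: 19; 15; 34; 15; 34; 15; 35; 15; 15; 15; 15; 34; 15; 34; 34; 34; 34; 34; 15; 34; 15; 34; 34; 34; 15; 15; 16; 15; 16; 16; 15; 15; 15; 34; 34; 34; 15; 34; 34; 15; 15; 34; 15; 15; 15];
  [:: 22; 17; 33; 34; 33; 17; 34; 17; 17; 17; 17; 33; 14; 33; 33; 33; 33; 33; 34; 34; 34; 34; 33; 33; 17; 17; 17; 17; 17; 17; 17; 17; 17; 33; 33; 14; 34; 34; 34; 17; 14; 34; 17; 14; 14];
  [:: 36; 37; 36; 36; 37; 36; 36; 36; 36; 36; 36; 36; 36; 36; 36; 36; 36; 36; 36; 36; 36; 36; 36; 36; 36; 36; 36; 36; 36; 36; 36; 36; 36; 36; 36; 36; 36; 36; 36; 36; 36; 36; 36; 36; 36];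
  [:: 37; 19; 38; 19; 38; 19; 19; 19; 19; 19; 19; 38; 19; 38; 38; 38; 38; 38; 19; 38; 19; 38; 38; 38; 19; 19; 19; 19; 19; 19; 19; 19; 19; 38; 38; 38; 19; 38; 38; 19; 19; 38; 19; 19; 19];
  [:: 36; 38; 20; 20; 21; 20; 20; 20; 20; 20; 20; 20; 20; 20; 20; 20; 20; 20; 20; 20; 20; 20; 20; 20; 20; 20; 20; 20; 20; 20; 20; 20; 20; 20; 20; 20; 20; 20; 20; 20; 20; 20; 20; 20; 20];
  [:: 37; 38; 21; 21; 38; 21; 21; 21; 21; 21; 21; 21; 21; 21; 21; 21; 21; 21; 21; 21; 21; 21; 21; 21; 21; 20; 20; 21; 20; 20; 21; 21; 21; 21; 21; 20; 21; 21; 21; 21; 20; 21; 21; 20; 20];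
  [:: 37; 22; 23; 22; 23; 22; 19; 22; 22; 19; 22; 23; 19; 23; 23; 23; 23; 23; 22; 23; 22; 23; 23; 23; 22; 19; 19; 19; 19; 19; 22; 22; 22; 23; 23; 19; 22; 23; 23; 19; 19; 23; 19; 19; 19];
  [:: 37; 23; 23; 23; 23; 23; 23; 23; 23; 23; 23; 23; 23; 23; 23; 23; 23; 23; 23; 23; 23; 23; 23; 23; 23; 23; 23; 23; 23; 23; 23; 23; 23; 23; 23; 23; 23; 23; 23; 23; 23; 23; 23; 23; 23];
  [:: 12; 16; 8; 34; 14; 31; 40; 8; 24; 8; 8; 31; 13; 8; 33; 8; 8; 33; 34; 34; 34; 34; 31; 31; 16; 12; 12; 17; 24; 24; 8; 24; 13; 33; 33; 8; 34; 34; 34; 8; 8; 34; 12; 8; 8];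
  [:: 5; 13; 5; 10; 8; 9; 12; 5; 10; 5; 5; 20; 5; 5; 20; 5; 5; 20; 10; 20; 10; 20; 20; 20; 8; 5; 5; 10; 9; 9; 5; 10; 5; 20; 20; 5; 10; 20; 20; 5; 5; 20; 5; 5; 5];
  [:: 10; 13; 28; 34; 8; 9; 24; 10; 26; 10; 8; 27; 8; 28; 29; 28; 8; 29; 30; 31; 31; 31; 29; 29; 8; 8; 10; 24; 24; 24; 10; 26; 8; 29; 29; 8; 34; 31; 31; 10; 8; 34; 8; 8; 8];
  [:: 20; 17; 29; 31; 33; 29; 31; 17; 27; 17; 17; 29; 14; 29; 29; 29; 29; 29; 31; 34; 31; 34; 29; 29; 17; 17; 20; 27; 27; 27; 17; 27; 17; 29; 29; 14; 34; 34; 34; 17; 8; 34; 17; 14; 14];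
  [:: 5; 33; 29; 31; 33; 29; 31; 5; 28; 5; 29; 29; 31; 29; 29; 29; 29; 29; 31; 34; 31; 34; 29; 29; 28; 5; 5; 28; 28; 28; 5; 28; 31; 29; 29; 29; 34; 34; 34; 5; 29; 34; 5; 29; 29];
  [:: 20; 33; 29; 34; 33; 29; 33; 20; 29; 20; 29; 29; 33; 29; 29; 29; 29; 29; 34; 34; 34; 34; 29; 29; 29; 20; 20; 29; 29; 29; 20; 29; 33; 29; 29; 29; 34; 34; 34; 20; 29; 34; 20; 29; 29];
  [:: 10; 15; 31; 34; 34; 31; 34; 10; 30; 10; 15; 31; 15; 31; 34; 31; 31; 34; 34; 34; 34; 34; 31; 31; 15; 10; 10; 30; 30; 30; 10; 30; 15; 34; 34; 31; 34; 34; 34; 10; 15; 34; 10; 15; 15];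
  [:: 20; 34; 34; 34; 34; 31; 34; 20; 31; 20; 34; 34; 34; 34; 34; 34; 34; 34; 34; 34; 34; 34; 34; 34; 31; 20; 20; 31; 31; 31; 20; 31; 34; 34; 34; 34; 34; 34; 34; 20; 31; 34; 20; 31; 31];
  [:: 19; 19; 5; 5; 11; 5; 12; 5; 5; 5; 5; 20; 5; 5; 20; 5; 5; 20; 5; 20; 5; 20; 20; 20; 19; 12; 12; 5; 12; 12; 5; 5; 5; 20; 20; 5; 5; 20; 20; 5; 5; 20; 12; 5; 5];
  [:: 23; 33; 33; 34; 33; 33; 34; 23; 33; 23; 33; 33; 33; 33; 33; 33; 33; 33; 34; 34; 34; 34; 33; 33; 33; 23; 23; 33; 33; 33; 23; 33; 33; 33; 33; 33; 34; 34; 34; 23; 33; 34; 23; 33; 33];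
  [:: 23; 34; 34; 34; 34; 34; 34; 23; 34; 23; 34; 34; 34; 34; 34; 34; 34; 34; 34; 34; 34; 34; 34; 34; 34; 23; 23; 34; 34; 34; 23; 34; 34; 34; 34; 34; 34; 34; 34; 23; 34; 34; 23; 34; 34];
  [:: 19; 15; 34; 15; 34; 15; 35; 15; 15; 15; 15; 34; 15; 34; 34; 34; 34; 34; 15; 34; 15; 34; 34; 34; 15; 15; 19; 15; 35; 35; 15; 15; 15; 34; 34; 34; 15; 34; 34; 15; 15; 34; 15; 15; 15];
  [:: 36; 41; 36; 36; 41; 36; 36; 36; 36; 36; 36; 36; 36; 36; 36; 36; 36; 36; 36; 36; 36; 36; 36; 36; 36; 36; 36; 36; 36; 36; 36; 36; 36; 36; 36; 36; 36; 36; 36; 36; 36; 36; 36; 36; 36];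
  [:: 41; 37; 37; 37; 37; 37; 37; 37; 37; 37; 37; 37; 37; 37; 37; 37; 37; 37; 37; 37; 37; 37; 37; 37; 37; 37; 37; 37; 37; 37; 37; 37; 37; 37; 37; 37; 37; 37; 37; 37; 37; 37; 37; 37; 37];
  [:: 37; 38; 38; 38; 38; 38; 38; 37; 38; 37; 38; 38; 38; 38; 38; 38; 38; 38; 38; 38; 38; 38; 38; 38; 37; 37; 37; 37; 38; 38; 37; 38; 38; 38; 38; 38; 38; 38; 38; 37; 37; 38; 37; 37; 37];
  [:: 32; 13; 8; 15; 8; 8; 16; 8; 8; 8; 8; 17; 8; 8; 29; 8; 8; 29; 15; 31; 15; 31; 29; 29; 8; 8; 16; 8; 16; 16; 8; 8; 8; 29; 29; 5; 15; 31; 31; 8; 8; 34; 8; 5; 5];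
  [:: 12; 16; 34; 34; 34; 34; 43; 10; 34; 10; 15; 34; 15; 34; 34; 34; 34; 34; 34; 34; 34; 34; 34; 34; 12; 12; 12; 20; 40; 40; 10; 34; 15; 34; 34; 31; 34; 34; 34; 10; 12; 34; 12; 12; 12];
  [:: 41; 41; 41; 41; 41; 41; 41; 41; 41; 41; 41; 41; 41; 41; 41; 41; 41; 41; 41; 41; 41; 41; 41; 41; 41; 41; 41; 41; 41; 41; 41; 41; 41; 41; 41; 41; 41; 41; 41; 41; 41; 41; 41; 41; 41];
  [:: 5; 13; 5; 10; 8; 9; 12; 5; 10; 5; 5; 20; 5; 5; 20; 5; 5; 20; 10; 20; 10; 20; 20; 20; 8; 5; 5; 10; 9; 9; 5; 10; 8; 20; 20; 5; 10; 20; 20; 5; 5; 20; 5; 5; 5];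
  [:: 12; 35; 34; 34; 34; 34; 44; 10; 34; 10; 15; 34; 15; 34; 34; 34; 34; 34; 34; 34; 34; 34; 34; 34; 12; 12; 12; 20; 43; 43; 10; 34; 15; 34; 34; 34; 34; 34; 34; 10; 12; 34; 12; 12; 12];
  [:: 12; 35; 34; 34; 34; 34; 44; 10; 34; 10; 15; 34; 15; 34; 34; 34; 34; 34; 34; 34; 34; 34; 34; 34; 12; 12; 12; 20; 44; 44; 10; 34; 15; 34; 34; 34; 34; 34; 34; 10; 12; 34; 12; 12; 12]].

Definition dflt : nat * nat * seq (stt * nat) := (0,0,[::]).
Definition checkF_gen (F : seq (nat * nat * seq (stt * nat))) (Tb : seq (seq nat)) : bool :=
  all (fun i => all (fun j =>
     let: (t1,g1) := nth dflt F i in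
     let: (t2,g2) := nth dflt F j in
     let: (t,g) := nth dflt F (nth 0 (nth [::] Tb i) j) in
     (nth 0 (nth [::] Tb i) j < size F) && (t == tagc t1 t2) && domchk g g1 g2)
   (iota 0 (size F))) (iota 0 (size F)).

Lemma checkF_ok : checkF_gen Ftab Tidx.
Proof. vm_compute. reflexivity. Qed.

Definition finok (s : stt) : bool :=
  let: (c,d,dm,k,cl,si) := s in [&& dm, k != 0 & ~~ cl].
Definition goodtag (t : nat * nat) : bool := (t.1 == 5) || (t.1 == 3) || (t == (4,3)).
Definition checkFin_gen (F : seq (nat * nat * seq (stt * nat))) : bool :=
  all (fun p => goodtag p.1 ==> has (fun q => finok q.1 && (q.2 <= 1)) p.2) F.
Lemma checkFin_ok : checkFin_gen Ftab.
Proof. vm_compute. reflexivity. Qed.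

Definition basel : seq (stt * nat) :=
  [:: ((false,false,false,0,false,false),0); ((false,true,true,0,false,false),1);
      ((true,false,false,1,false,false),1); ((true,true,true,1,false,false),2)].
Lemma base_in : ((1,0), basel) \in Ftab.
Proof. exact: mem_head. Qed.

Lemma closure_gen F Tb : checkF_gen F Tb -> forall t1 g1 t2 g2,
  (t1, g1) \in F -> (t2, g2) \in F ->
  exists g, (tagc t1 t2, g) \in F /\ domchk g g1 g2.
Proof.
move=> H t1 g1 t2 g2 m1 m2; move: H; rewrite /checkF_gen => /allP /(_ (index (t1, g1) F)).
rewrite mem_iota add0n index_mem m1 => /(_ isT) /allP /(_ (index (t2, g2) F)).
rewrite mem_iota add0n index_mem m2 => /(_ isT).
rewrite !nth_index //.
case E: (nth dflt F _) => [t g] /andP [/andP [lt /eqP Et] D].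
by exists g; rewrite -Et; split => //; rewrite -E mem_nth.
Qed.

Lemma closure t1 g1 t2 g2 : (t1, g1) \in Ftab -> (t2, g2) \in Ftab ->
  exists g, (tagc t1 t2, g) \in Ftab /\ domchk g g1 g2.
Proof. by move=> m1 m2; apply: (closure_gen checkF_ok m1 m2). Qed.

Lemma final_gen F t g : checkFin_gen F -> (t, g) \in F -> goodtag t ->
  exists s b, [/\ (s, b) \in g, finok s & b <= 1].
Proof.
move=> /allP H m gt; move: (H _ m) => /= /implyP /(_ gt) /hasP [[s b] sb /andP [f bl]].
by exists s, b.
Qed.


Section Glue.
Variables (T : finType) (e : rel T).
Hypothesis Hsym : symmetric e.
Hypothesis eirr : irreflexive e.

Local Notation N := (cnbhd e).

Lemma inN x y : (y \in N x) = (y == x) || e x y.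
Proof. by rewrite inE. Qed.

Lemma N_self x : x \in N x.
Proof. by rewrite inN eqxx. Qed.

Definition Valid (S : {set T}) (u : T) (C D : {set T}) : Prop :=
  [/\ C \subset S, D \subset S,
      {in S, forall x, x != u -> N x :&: D != set0},
      {in S, forall x, x != u -> N x :&: C != set0} &
      {in S &, forall x y, x != u -> y != u -> x != y -> N x :&: C != N y :&: C}].

Definition kind (A : {set T}) (u : T) : nat :=
  if A == set0 then 0 else if A == [set u] then 1 else 2.

Definition st (S : {set T}) (u : T) (C D : {set T}) : stt :=
  (u \in C, u \in D, N u :&: D != set0, kind (N u :&: C) u,
   [exists x in S, (x != u) && (N x :&: C == N u :&: C)],
   [exists x in S, (x != u) && (N x :&: C == [set u])]).

Definition Ach (S : {set T}) (u : T) (s : stt) (b : nat) : Prop :=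
  exists C D, [/\ Valid S u C D, st S u C D = s & #|C| + #|D| + 1 <= #|S| + b].

Lemma set11_eq0 (u : T) : ([set u] == set0) = false.
Proof. by apply/negbTE/set0Pn; exists u; rewrite inE. Qed.

Lemma base_ach u s b : (s, b) \in
   [:: ((false,false,false,0,false,false),0); ((false,true,true,0,false,false),1);
       ((true,false,false,1,false,false),1); ((true,true,true,1,false,false),2)] ->
   Ach [set u] u s b.
Proof.
have V (C D : {set T}) : C \subset [set u] -> D \subset [set u] -> Valid [set u] u C D.
  move=> HC HD; split=> //.
  - by move=> x; rewrite inE => ->.
  - by move=> x; rewrite inE => ->.
  - by move=> x y; rewrite !inE => /eqP -> _ /eqP [].
have cx (P : pred T) : [exists y in [set u], (y != u) && P y] = false.
  by apply/negbTE/existsP => -[y]; rewrite inE; case/andP=> /eqP -> /andP [/eqP []].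
have N0 : N u :&: set0 = set0 by rewrite setI0.
have N1 : N u :&: [set u] = [set u].
  by apply/setP=> y; rewrite !inE; case: (y =P u) => [->|]; rewrite ?eqxx ?andbF.
rewrite !inE => /or4P [] /eqP [-> ->].
- exists set0, set0; split; [by apply: V; rewrite sub0set | | by rewrite ?cards0 ?cards1].
  by rewrite /st N0 /kind eqxx !inE !cx.
- exists set0, [set u]; split; [by apply: V; rewrite ?sub0set | | by rewrite ?cards0 ?cards1].
  rewrite /st ?N0 ?N1 /kind ?eqxx !inE ?eqxx ?set11_eq0 /=.
  by rewrite !cx.
- exists [set u], set0; split; [by apply: V; rewrite ?sub0set | | by rewrite ?cards0 ?cards1].
  rewrite /st ?N0 ?N1 /kind ?eqxx !inE ?eqxx ?set11_eq0 /=.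
  by rewrite !cx.
- exists [set u], [set u]; split; [by apply: V | | by rewrite ?cards0 ?cards1].
  rewrite /st ?N0 ?N1 /kind ?eqxx !inE ?eqxx ?set11_eq0 /=.
  by rewrite !cx.
Qed.

Lemma Nsym x y : (x \in N y) = (y \in N x).
Proof. by rewrite !inN eq_sym Hsym. Qed.

Lemma kind0 A u : (kind A u == 0) = (A == set0).
Proof. by rewrite /kind; case: (A == set0) => //; case: (A == [set u]). Qed.
Lemma kind1 A u : (kind A u == 1) = (A == [set u]).
Proof.
rewrite /kind; case: (A =P set0) => [->|_] /=; last by case: (A == [set u]).
by rewrite [set0 == _]eq_sym set11_eq0.
Qed.

Section Glue2.
Variables (S1 S2 : {set T}) (u c : T).
Hypothesis Hdis : [disjoint S1 & S2].
Hypothesis Hu : u \in S1.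
Hypothesis Hc : c \in S2.
Hypothesis Huc : e u c.
Hypothesis H3 : {in S1, forall x, x != u -> N x \subset S1}.
Hypothesis H4 : {in S2, forall y, y != c -> N y \subset S2}.
Hypothesis H5 : N c \subset u |: S2.

Lemma uS2 : (u \in S2) = false. Proof. exact: disjointFr Hdis Hu. Qed.
Lemma cS1 : (c \in S1) = false. Proof. exact: disjointFl Hdis Hc. Qed.
Lemma cu : (c == u) = false.
Proof. by apply/negbTE; apply: contraTneq Hc => ->; rewrite uS2. Qed.

Lemma split_eq (A1 B1 A2 B2 : {set T}) : A1 \subset S1 -> B1 \subset S1 ->
  A2 \subset S2 -> B2 \subset S2 -> (A1 :|: A2 == B1 :|: B2) = (A1 == B1) && (A2 == B2).
Proof.
move=> sA1 sB1 sA2 sB2; apply/eqP/andP => [E|[/eqP -> /eqP ->]//]; split.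
- apply/eqP/setP=> z; move/setP: E => /(_ z); rewrite !inE.
  case: (boolP (z \in S1)) => zS1.
  + have zS2 : z \in S2 = false by rewrite (disjointFr Hdis zS1).
    by rewrite (contraFF (subsetP sA2 z) zS2) (contraFF (subsetP sB2 z) zS2) !orbF.
  + by rewrite (contraNF (subsetP sA1 z) zS1) (contraNF (subsetP sB1 z) zS1).
- apply/eqP/setP=> z; move/setP: E => /(_ z); rewrite !inE.
  case: (boolP (z \in S2)) => zS2.
  + have zS1 : z \in S1 = false by rewrite (disjointFl Hdis zS2).
    by rewrite (contraFF (subsetP sA1 z) zS1) (contraFF (subsetP sB1 z) zS1).
  + by rewrite (contraNF (subsetP sA2 z) zS2) (contraNF (subsetP sB2 z) zS2) !orbF.
Qed.

Section Codes.
Lemma split_eqL (A1 A2 B : {set T}) : A1 \subset S1 -> A2 \subset S2 -> B \subset S1 ->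
  (A1 :|: A2 == B) = (A1 == B) && (A2 == set0).
Proof. by move=> s1 s2 s3; have := split_eq s1 s3 s2 (sub0set S2); rewrite setU0. Qed.

Lemma split_eqR (A1 A2 B : {set T}) : A1 \subset S1 -> A2 \subset S2 -> B \subset S2 ->
  (A1 :|: A2 == B) = (A1 == set0) && (A2 == B).
Proof. by move=> s1 s2 s3; have := split_eq s1 (sub0set S1) s2 s3; rewrite set0U. Qed.

Variables (A1 A2 : {set T}).
Hypothesis sA1 : A1 \subset S1.
Hypothesis sA2 : A2 \subset S2.

Lemma codeL x : x \in S1 -> x != u -> N x :&: (A1 :|: A2) = (N x :&: A1) :|: set0.
Proof.
move=> xS1 xu; rewrite setU0; apply/setP=> z; rewrite !(in_setI, in_setU, in_set0).
case: (boolP (z \in N x)) => //= zN.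
have zS1 : z \in S1 by apply: (subsetP (H3 xS1 xu)).
have zA2 : (z \in A2) = false.
  by apply: (contraFF (subsetP sA2 z)); exact: disjointFr Hdis zS1.
by rewrite zA2 orbF.
Qed.

Lemma codeR y : y \in S2 -> y != c -> N y :&: (A1 :|: A2) = set0 :|: (N y :&: A2).
Proof.
move=> yS2 yc; rewrite set0U; apply/setP=> z; rewrite !(in_setI, in_setU, in_set0).
case: (boolP (z \in N y)) => //= zN.
have zS2 : z \in S2 by apply: (subsetP (H4 yS2 yc)).
have zA1 : (z \in A1) = false.
  by apply: (contraFF (subsetP sA1 z)); exact: disjointFl Hdis zS2.
by rewrite zA1.
Qed.

Lemma codeC : N c :&: (A1 :|: A2) = (if u \in A1 then [set u] else set0) :|: (N c :&: A2).
Proof.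
apply/setP=> z; rewrite !(in_setI, in_setU, in_set0).
case: (boolP (z \in N c)) => zN /=; last first.
  case: ifP => _; rewrite ?(in_set1, in_set0) //.
  by case: (z =P u) => // E; rewrite E Nsym inN Huc orbT in zN.
have := subsetP H5 z zN; move/setU1P => [->|zS2].
  by rewrite (contraFF (subsetP sA2 u)) ?uS2 // orbF; case: ifP; rewrite ?(in_set1, in_set0) ?eqxx.
rewrite (contraFF (subsetP sA1 z)) ?(disjointFl Hdis zS2) //=.
by case: ifP => _; rewrite ?(in_set1, in_set0) //; case: (z =P u) => // E; rewrite E uS2 in zS2.
Qed.

Lemma codeU : N u :&: (A1 :|: A2) = (N u :&: A1) :|: (if c \in A2 then [set c] else set0).
Proof.
have NuS2 y : y \in S2 -> y \in N u -> y = c.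
  move=> yS2 yN; apply/eqP; apply: contraTT isT => yc.
  have := subsetP (H4 yS2 yc) u; rewrite Nsym yN => /(_ isT); by rewrite uS2.
apply/setP=> z; rewrite !(in_setI, in_setU, in_set0).
case: (boolP (z \in N u)) => zN /=; last first.
  case: ifP => _; rewrite ?(in_set1, in_set0) //.
  by case: (z =P c) => // E; rewrite E inN Huc orbT in zN.
case: (boolP (z \in S1)) => zS1.
  have zc : (z == c) = false by apply/negbTE; apply: contraTneq zS1 => ->; rewrite cS1.
  rewrite (contraFF (subsetP sA2 z)) ?(disjointFr Hdis zS1) // orbF.
  by case: ifP; rewrite ?(in_set1, in_set0) ?zc ?orbF.
rewrite (contraNF (subsetP sA1 z)) //=.
case: (boolP (z \in A2)) => zA2.
  by have E := NuS2 z (subsetP sA2 z zA2) zN; subst z; rewrite zA2 in_set1 eqxx.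
by case: ifP => cA2; rewrite ?in_set1 ?in_set0 //; apply/esym/negbTE/eqP => E; rewrite E cA2 in zA2.
Qed.

End Codes.

Lemma setU_neq0 (A B : {set T}) : (A :|: B != set0) = (A != set0) || (B != set0).
Proof. by rewrite setU_eq0 negb_and. Qed.

Lemma set1_neq0 (x : T) : [set x] != set0.
Proof. by rewrite set11_eq0. Qed.

Lemma subIS1 x (A : {set T}) (S : {set T}) : A \subset S -> N x :&: A \subset S.
Proof. by move=> sA; apply: subset_trans (subsetIr _ _) sA. Qed.

Lemma glue C1 D1 C2 D2 s :
  Valid S1 u C1 D1 -> Valid S2 c C2 D2 ->
  merge (st S1 u C1 D1) (st S2 c C2 D2) = Some s ->
  Valid (S1 :|: S2) u (C1 :|: C2) (D1 :|: D2) /\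
  st (S1 :|: S2) u (C1 :|: C2) (D1 :|: D2) = s.
Proof.
case=> sC1 sD1 dom1 cod1 dis1 [sC2 sD2 dom2 cod2 dis2].
rewrite /merge /st /=.
case: ifP => // M1; case: ifP => // M2; case: ifP => // M3; case: ifP => // M4 [<-].
move/negbFE: M1 => M1; move/negbFE: M2; rewrite kind0 => M2.
set U := (if u \in C1 then [set u] else set0).
have sU : U \subset S1 by rewrite /U; case: ifP; rewrite ?sub1set ?sub0set.
have sNC1 x : N x :&: C1 \subset S1 := subIS1 x sC1.
have sNC2 x : N x :&: C2 \subset S2 := subIS1 x sC2.
have s0 : set0 \subset S1 by rewrite sub0set.
have s0' : set0 \subset S2 by rewrite sub0set.
have s1u : [set u] \subset S1 by rewrite sub1set.
have s1c : [set c] \subset S2 by rewrite sub1set.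
have uC2 : (u \in C2) = false by apply: (contraFF (subsetP sC2 u)); rewrite uS2.
have uD2 : (u \in D2) = false by apply: (contraFF (subsetP sD2 u)); rewrite uS2.
have cuF : (c == u) = false := cu.
have ucF : (u == c) = false by rewrite eq_sym.
have Uu : (U == [set u]) = (u \in C1) by rewrite /U; case: ifP; rewrite ?eqxx // eq_sym set11_eq0.
have U0 : (U == set0) = (u \notin C1) by rewrite /U; case: ifP; rewrite ?eqxx // set11_eq0.
have eL x : x \in S1 -> x != u -> N x :&: (C1 :|: C2) = (N x :&: C1) :|: set0.
  by move=> *; apply: codeL.
have eR y : y \in S2 -> y != c -> N y :&: (C1 :|: C2) = set0 :|: (N y :&: C2).
  by move=> *; apply: codeR.
have eC : N c :&: (C1 :|: C2) = U :|: (N c :&: C2) by apply: codeC.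
have eU : N u :&: (C1 :|: C2) = (N u :&: C1) :|: (if c \in C2 then [set c] else set0).
  by apply: codeU.
have eLD x : x \in S1 -> x != u -> N x :&: (D1 :|: D2) = (N x :&: D1) :|: set0.
  by move=> *; apply: codeL.
have eRD y : y \in S2 -> y != c -> N y :&: (D1 :|: D2) = set0 :|: (N y :&: D2).
  by move=> *; apply: codeR.
have eCD : N c :&: (D1 :|: D2) = (if u \in D1 then [set u] else set0) :|: (N c :&: D2).
  by apply: codeC.
have eUD : N u :&: (D1 :|: D2) = (N u :&: D1) :|: (if c \in D2 then [set c] else set0).
  by apply: codeU.
have cm12 x y : x \in S1 -> x != u -> y \in S2 -> N x :&: (C1 :|: C2) != N y :&: (C1 :|: C2).
  move=> xS1 xu yS2; rewrite (eL x xS1 xu).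
  case: (y =P c) => [->|/eqP yc].
    rewrite eC split_eq //; apply/negP => /andP [/eqP E /eqP E2].
    move: M4; rewrite kind0 -E2 eqxx /=.
    have uC1 : u \in C1 by move: (cod1 x xS1 xu); rewrite E /U; case: ifP => //; rewrite eqxx.
    rewrite uC1 /= => /negbT/existsPn/(_ x).
    by rewrite xS1 xu E /U uC1 eqxx.
  rewrite (eR y yS2 yc) split_eq //; apply/negP => /andP [/eqP E _].
  by move: (cod1 x xS1 xu); rewrite E eqxx.
split.
  split.
  - exact: setUSS.
  - exact: setUSS.
  - move=> x; rewrite in_setU => /orP [xS1|xS2] xu.
      by rewrite (eLD x xS1 xu) setU0; apply: dom1.
    case: (x =P c) => [->|/eqP xc].
      rewrite eCD setU_neq0; case/orP: M1 => [->|uD1]; first by rewrite orbT.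
      by rewrite uD1 set1_neq0.
    by rewrite (eRD x xS2 xc) set0U; apply: dom2.
  - move=> x; rewrite in_setU => /orP [xS1|xS2] xu.
      by rewrite (eL x xS1 xu) setU0; apply: cod1.
    case: (x =P c) => [->|/eqP xc].
      rewrite eC setU_neq0; case/orP: M2 => [->|uC1]; first by rewrite orbT.
      by rewrite /U uC1 set1_neq0.
    by rewrite (eR x xS2 xc) set0U; apply: cod2.
  - move=> x y; rewrite !in_setU => /orP[xS1|xS2] /orP[yS1|yS2] xu yu xy.
    + by rewrite (eL x xS1 xu) (eL y yS1 yu) !setU0; apply: dis1.
    + exact: cm12.
    + by rewrite eq_sym; apply: cm12.
    + case: (x =P c) => [Ex|/eqP xc]; case: (y =P c) => [Ey|/eqP yc].
      * by rewrite Ex Ey eqxx in xy.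
      * subst x; rewrite eC (eR y yS2 yc) split_eq //; apply/negP => /andP [/eqP E1 /eqP E2].
        move: M3; rewrite -U0 E1 eqxx /=; move/negbT/existsPn/(_ y).
        by rewrite yS2 yc -E2 eqxx.
      * subst y; rewrite eC (eR x xS2 xc) split_eq //; apply/negP => /andP [/eqP E1 /eqP E2].
        move: M3; rewrite -U0 -E1 eqxx /=; move/negbT/existsPn/(_ x).
        by rewrite xS2 xc E2 eqxx.
      * by rewrite (eR x xS2 xc) (eR y yS2 yc) !set0U; apply: dis2.
congr (_,_,_,_,_,_).
- by rewrite in_setU uC2 orbF.
- by rewrite in_setU uD2 orbF.
- by rewrite eUD setU_neq0; case: (c \in D2); rewrite ?set1_neq0 ?eqxx ?orbT ?orbF.
- rewrite eU; case: ifP => cC2; last by rewrite setU0.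
  rewrite /kind; have -> : (N u :&: C1 :|: [set c] == set0) = false.
    by apply/negbTE; rewrite setU_neq0 set1_neq0 orbT.
  have -> // : (N u :&: C1 :|: [set c] == [set u]) = false.
  by apply/negbTE/negP => /eqP /setP /(_ c); rewrite !inE eqxx orbT cuF.
- rewrite eU; case: ifP => cC2.
  + rewrite ?kind0 ?kind1; apply/existsP/idP.
    * case=> x /and3P [xS xu E]; move: xS; rewrite in_setU => /orP [xS1|xS2].
        move: E; rewrite (eL x xS1 xu) split_eq // => /andP [_ /eqP E].
        by move: (set1_neq0 c); rewrite -E eqxx.
      case: (x =P c) => [Ex|/eqP xc].
        subst x; move: E; rewrite eC split_eq // => /andP [/eqP E1 /eqP E2].
        by rewrite E2 eqxx !andbT -E1 /U; case: ifP; rewrite ?eqxx ?orbT.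
      move: E; rewrite (eR x xS2 xc) split_eq // => /andP [/eqP E1 /eqP E2].
      apply/orP; right; apply/orP; right; rewrite -E1 eqxx /=.
      by apply/existsP; exists x; rewrite xS2 xc E2 eqxx.
    * case/or3P => [/andP [/eqP P10 /eqP Pc]|/andP [/eqP P1u /eqP Pc]|/andP [/eqP P10 /existsP [x /and3P [xS2 xc /eqP Ex]]]].
      - exists c; rewrite in_setU Hc orbT cuF /= eC P10 Pc.
        have : u \notin N u :&: C1 by rewrite P10 inE.
        by rewrite in_setI N_self /= => uC1; rewrite /U (negbTE uC1) eqxx.
      - exists c; rewrite in_setU Hc orbT cuF /= eC P1u Pc.
        have : u \in N u :&: C1 by rewrite P1u set11.
        by rewrite in_setI N_self /= => uC1; rewrite /U uC1 eqxx.
      - have xu : x != u by apply: contraTneq xS2 => ->; rewrite uS2.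
        by exists x; rewrite in_setU xS2 orbT xu /= (eR x xS2 xc) P10 Ex eqxx.
  + rewrite setU0 ?kind0 ?kind1; apply/existsP/idP.
    * case=> x /and3P [xS xu E]; move: xS; rewrite in_setU => /orP [xS1|xS2].
        apply/orP; left; apply/existsP; exists x; rewrite xS1 xu /=.
        by move: E; rewrite (eL x xS1 xu) setU0.
      case: (x =P c) => [Ex|/eqP xc].
        subst x; move: E; rewrite eC split_eqL // => /andP [/eqP E1 /eqP E2].
        apply/orP; right; rewrite E2 eqxx /=.
        rewrite E2 eqxx /= in M2.
        by rewrite -E1 /U M2 eqxx.
      move: E; rewrite (eR x xS2 xc) split_eqL // => /andP [_ /eqP E2].
      by move: (cod2 x xS2 xc); rewrite E2 eqxx.
    * case/orP => [/existsP [x /and3P [xS1 xu /eqP Ex]] | /and3P [/eqP P1u /eqP Pc uC1]].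
      - by exists x; rewrite in_setU xS1 xu (eL x xS1 xu) setU0 Ex eqxx.
      - by exists c; rewrite in_setU Hc orbT cuF /= eC Pc P1u /U uC1 setU0 eqxx.
- rewrite ?kind0; apply/existsP/idP.
  + case=> x /and3P [xS xu E]; move: xS; rewrite in_setU => /orP [xS1|xS2].
      apply/orP; left; apply/existsP; exists x; rewrite xS1 xu /=.
      by move: E; rewrite (eL x xS1 xu) setU0.
    case: (x =P c) => [Ex|/eqP xc].
      subst x; move: E; rewrite eC split_eqL // => /andP [E1 /eqP E2].
      apply/orP; right; rewrite E2 eqxx andbT.
      by move: E1; rewrite /U; case: ifP => // _; rewrite eq_sym set11_eq0.
    move: E; rewrite (eR x xS2 xc) split_eqL // => /andP [E1 _].
    by move: E1; rewrite eq_sym set11_eq0.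
  + case/orP => [/existsP [x /and3P [xS1 xu /eqP Ex]] | /andP [uC1 /eqP Pc]].
    * by exists x; rewrite in_setU xS1 xu (eL x xS1 xu) setU0 Ex eqxx.
    * by exists c; rewrite in_setU Hc orbT cuF /= eC Pc /U uC1 setU0 eqxx.
Qed.

Lemma cardsU_disj (A B : {set T}) : [disjoint A & B] -> #|A :|: B| = #|A| + #|B|.
Proof. by move=> d; case: (leq_card_setU A B) => _; rewrite d => /eqP. Qed.

Lemma glue_ach s1 s2 s b1 b2 b : Ach S1 u s1 b1 -> Ach S2 c s2 b2 ->
  merge s1 s2 = Some s -> b1 + b2 <= b + 1 -> Ach (S1 :|: S2) u s b.
Proof.
move=> [C1 [D1 [V1 E1 K1]]] [C2 [D2 [V2 E2 K2]]] M Hb.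
have [V E] := glue V1 V2 (etrans (f_equal2 merge E1 E2) M).
exists (C1 :|: C2), (D1 :|: D2); split => //.
case: V1 => sC1 sD1 _ _ _; case: V2 => sC2 sD2 _ _ _.
have dC : [disjoint C1 & C2] := disjointW sC1 sC2 Hdis.
have dD : [disjoint D1 & D2] := disjointW sD1 sD2 Hdis.
rewrite (cardsU_disj dC) (cardsU_disj dD) (cardsU_disj Hdis).
move: K1 K2 Hb; clear; lia.
Qed.

End Glue2.
End Glue.


Lemma cardsU_disj' (T : finType) (A B : {set T}) : [disjoint A & B] -> #|A :|: B| = #|A| + #|B|.
Proof. by move=> d; case: (leq_card_setU A B) => _; rewrite d => /eqP. Qed.

Section Tree.
Variables (T : finType) (e : rel T).
Hypothesis Hsym : symmetric e.
Hypothesis Hirr : irreflexive e.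
Hypothesis Hconn : forall x y, connect e x y.
Hypothesis Hned : nedges e = #|T| - 1.
Variable r0 : T.

Fixpoint R (k : nat) : {set T} :=
  if k is k'.+1 then [set y | [exists x in R k', e x y]] else [set r0].

Lemma R_path x p j : x \in R j -> path e x p -> last x p \in R (j + size p).
Proof.
elim: p x j => [|y p IH] x j /=; first by rewrite addn0.
move=> xR /andP [exy pp]; rewrite addnS -addSn; apply: IH pp.
by rewrite /= inE; apply/existsP; exists x; rewrite xR.
Qed.

Lemma Rex v : exists k, v \in R k.
Proof.
have /connectP [p pp ->] := Hconn r0 v.
by exists (size p); rewrite -[size p]add0n; apply: R_path => //=; rewrite inE.
Qed.

Definition dep v : nat := ex_minn (Rex v).

Lemma depR v : v \in R (dep v).
Proof. by rewrite /dep; case: ex_minnP. Qed.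

Lemma dep_min v k : v \in R k -> dep v <= k.
Proof. by rewrite /dep; case: ex_minnP => m _ H /H. Qed.

Lemma dep0 v : (dep v == 0) = (v == r0).
Proof.
apply/idP/idP => [/eqP d|/eqP ->].
  by have := depR v; rewrite d inE.
by rewrite -leqn0; apply: dep_min; rewrite inE.
Qed.

Lemma dep_r0 : dep r0 = 0.
Proof. by apply/eqP; rewrite dep0. Qed.

Lemma dep_edge x y : e x y -> dep y <= (dep x).+1.
Proof.
move=> exy; apply: dep_min => /=; rewrite inE; apply/existsP; exists x.
by rewrite depR.
Qed.

Lemma par_ex v : v != r0 -> exists x, e v x && ((dep x).+1 == dep v).
Proof.
move=> vr; have := depR v; rewrite -dep0 in vr.
case E: (dep v) vr => [//|k] _ /=; rewrite inE => /existsP [x /andP [xR exv]].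
exists x; rewrite Hsym exv /=; apply/eqP; congr S.
have := dep_min xR; rewrite leq_eqVlt => /orP [/eqP //|lt].
have := dep_edge exv; rewrite E; lia.
Qed.

Definition par (v : T) : T :=
  if v == r0 then r0 else odflt r0 [pick x | e v x && ((dep x).+1 == dep v)].

Lemma par_spec v : v != r0 -> e v (par v) /\ (dep (par v)).+1 = dep v.
Proof.
move=> vr; rewrite /par (negbTE vr).
case: pickP => [x /andP [exv /eqP d]|H] //=.
by have [x] := par_ex vr; rewrite H.
Qed.

Lemma par_r0 : par r0 = r0.
Proof. by rewrite /par eqxx. Qed.

Lemma dep_par v : v != r0 -> dep v = (dep (par v)).+1.
Proof. by case/par_spec. Qed.

Lemma edge_pc x y : e x y -> ((x != r0) && (par x == y)) || ((y != r0) && (par y == x)).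
Proof.
move=> exy; apply: contraTT isT => H.
have n0 : 0 < #|T| by apply/card_gt0P; exists r0.
set E := [set p : T * T | e p.1 p.2].
set Pd := [set (v, par v) | v in [set~ r0]].
set Pu := [set (par v, v) | v in [set~ r0]].
have cPd : #|Pd| = #|T|.-1 by rewrite card_imset ?cardsC1 // => a b [].
have cPu : #|Pu| = #|T|.-1 by rewrite card_imset ?cardsC1 // => a b [].
have dPdu : [disjoint Pd & Pu].
  apply/pred0P => -[a b] /=; apply/negP => /andP [/imsetP [v vr [-> ->]] /imsetP [w wr [E1 E2]]].
  rewrite !inE in vr wr.
  have := dep_par vr; have := dep_par wr; rewrite -E1 E2; lia.
have inPd a b : ((a, b) \in Pd) = (a != r0) && (par a == b).
  apply/imsetP/andP => [[v vr [-> ->]]|[ar /eqP <-]]; first by rewrite in_setC1 in vr; split...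
  by exists a; rewrite ?inE.
have inPu a b : ((a, b) \in Pu) = (b != r0) && (par b == a).
  apply/imsetP/andP => [[v vr [-> ->]]|[br /eqP <-]]; first by rewrite in_setC1 in vr; split...
  by exists b; rewrite ?inE.
have xy : x != y by apply: contraTneq exy => ->; rewrite Hirr.
have dq : [disjoint Pd :|: Pu & [set (x, y); (y, x)]].
  rewrite disjoint_sym disjoints_subset; apply/subsetP => q.
  rewrite !inE => /orP [] /eqP ->; rewrite !inPd !inPu //.
  by rewrite orbC.
have sub : (Pd :|: Pu) :|: [set (x, y); (y, x)] \subset E.
  apply/subsetP => -[a b]; rewrite !inE inPd inPu => /orP [/orP [/andP [ar /eqP <-]|/andP [br /eqP <-]]|/orP [] /eqP [-> ->]] //=.
  - by case: (par_spec ar).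
  - by rewrite Hsym; case: (par_spec br).
  - by rewrite Hsym.
have := subset_leq_card sub.
rewrite cardsU_disj' // cardsU_disj' // cPd cPu cards2.
have: #|E| %/ 2 = #|T| - 1 by [].
have nq : ((x, y) != (y, x)) by apply/negP => /eqP [Ex _]; rewrite Ex eqxx in xy.
rewrite nq; move: n0; clear; lia.
Qed.

Lemma dep_iter j w : j <= dep w -> dep (iter j par w) = dep w - j.
Proof.
elim: j => [|j IH] jw; first by rewrite subn0.
rewrite iterS; set v := iter j par w.
have dv : dep v = dep w - j by apply: IH; lia.
have vr : v != r0 by rewrite -dep0 dv; lia.
have := dep_par vr; lia.
Qed.

Definition Desc (c : T) : {set T} :=
  [set w | (dep c <= dep w) && (iter (dep w - dep c) par w == c)].

Lemma Desc_self c : c \in Desc c.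
Proof. by rewrite inE leqnn subnn eqxx. Qed.

Lemma Desc_dep c w : w \in Desc c -> dep c <= dep w.
Proof. by rewrite inE => /andP []. Qed.

Lemma Desc_up c w : w \in Desc c -> w != c -> (w != r0) /\ (par w \in Desc c).
Proof.
rewrite inE => /andP [dcw /eqP it] wc.
have lt : dep c < dep w.
  rewrite ltn_neqAle dcw andbT; apply: contraNneq wc => E.
  by rewrite -it E subnn.
have wr : w != r0 by rewrite -dep0; lia.
split => //; have dp := dep_par wr.
rewrite inE; apply/andP; split; first lia.
by rewrite -iterSr (_ : (dep (par w) - dep c).+1 = dep w - dep c) ?it //; lia.
Qed.

Lemma Desc_down c w y : w \in Desc c -> y != r0 -> par y = w -> y \in Desc c.
Proof.
rewrite !inE => /andP [dcw /eqP it] yr py.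
have dy := dep_par yr; rewrite py in dy.
apply/andP; split; first lia.
by rewrite (_ : dep y - dep c = (dep w - dep c).+1) ?iterSr ?py ?it //; lia.
Qed.

Lemma Desc_nbr c w y : w \in Desc c -> w != c -> e w y -> y \in Desc c.
Proof.
move=> wD wc /edge_pc /orP [/andP [wr /eqP <-]|/andP [yr /eqP py]].
  by case: (Desc_up wD wc).
exact: Desc_down wD yr py.
Qed.

Lemma Desc_cnbr c y : e c y -> (y \in Desc c) || (y == par c).
Proof.
move/edge_pc => /orP [/andP [_ /eqP ->]|/andP [yr /eqP py]]; first by rewrite eqxx orbT.
by rewrite (Desc_down (Desc_self c) yr py).
Qed.

Lemma par_notin c : c != r0 -> par c \notin Desc c.
Proof.
move=> cr; apply/negP => /Desc_dep; have := dep_par cr; lia.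
Qed.

Definition children (c : T) : {set T} := [set y | (y != r0) && (par y == c)].

Lemma Desc_disj c c' : c \in children (par c') -> c' != r0 -> c != c' ->
  [disjoint Desc c & Desc c'].
Proof.
rewrite inE => /andP [cr /eqP pc] c'r cc'.
have dd : dep c = dep c' by rewrite (dep_par cr) (dep_par c'r) pc.
apply/pred0P => w /=; apply/negP => /andP [].
rewrite !inE dd => /andP [_ /eqP E1] /andP [_ /eqP E2].
by rewrite -E1 E2 eqxx in cc'.
Qed.

Lemma Desc_sub c y : y \in children c -> Desc y \subset Desc c.
Proof.
rewrite inE => /andP [yr /eqP py]; apply/subsetP => w.
rewrite !inE => /andP [dyw /eqP it].
have dy := dep_par yr; rewrite py in dy.
apply/andP; split; first lia.
by rewrite (_ : dep w - dep c = (dep w - dep y).+1) ?iterS ?it ?py //; lia.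
Qed.

Lemma Desc_decomp c : Desc c = c |: \bigcup_(y in children c) Desc y.
Proof.
apply/setP => w; apply/idP/idP; last first.
  case/setU1P => [->|/bigcupP [y yc wy]]; first exact: Desc_self.
  exact: subsetP (Desc_sub yc) w wy.
move=> wD; case: (w =P c) => [->|/eqP wc]; first by rewrite setU11.
apply/setU1P; right; apply/bigcupP.
have := Desc_dep wD; have := wD; rewrite inE => /andP [dcw /eqP it] _.
have lt : dep c < dep w.
  rewrite ltn_neqAle dcw andbT; apply: contraNneq wc => E.
  by rewrite -it E subnn.
set y := iter (dep w - dep c).-1 par w.
have dy : dep y = (dep c).+1 by rewrite /y dep_iter; lia.
have yr : y != r0 by rewrite -dep0 dy.
exists y.
  rewrite inE yr /= /y -iterS (_ : (dep w - dep c).-1.+1 = dep w - dep c) ?it //; lia.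
rewrite inE dy; apply/andP; split; first lia.
by rewrite /y (_ : dep w - (dep c).+1 = (dep w - dep c).-1) //; lia.
Qed.

Lemma Desc_root : Desc r0 = setT.
Proof.
apply/setP => w; rewrite !inE dep_r0 subn0 /=.
by rewrite -dep0 dep_iter // subnn.
Qed.

Definition Piece (v : T) (L : seq T) : {set T} := v |: \bigcup_(y <- L) Desc y.

Lemma Piece_nil v : Piece v [::] = [set v].
Proof. by rewrite /Piece big_nil setU0. Qed.

Lemma Piece_cons v y L : Piece v (y :: L) = Piece v L :|: Desc y.
Proof. by rewrite /Piece big_cons setUCA setUC. Qed.

Lemma Desc_Piece c : Desc c = Piece c (enum (children c)).
Proof. by rewrite /Piece big_enum /= -Desc_decomp. Qed.

Lemma inPiece v L w : (w \in Piece v L) = (w == v) || has (fun y => w \in Desc y) L.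
Proof.
rewrite /Piece in_setU1; congr (_ || _).
elim: L => [|y L IH]; first by rewrite big_nil inE.
by rewrite big_cons in_setU IH.
Qed.

End Tree.


Lemma tag_glue s1 s2 k1 k2 : 0 < s1 -> 0 < s2 ->
  tagf (s1 + s2) k1.+1 = tagc (tagf s1 k1) (tagf s2 k2).
Proof.
move=> p1 p2; rewrite /tagc /tagf.
case: (leqP 5 s1) => h1; case: (leqP 5 s2) => h2; case: (leqP 5 (s1 + s2)) => h3 /=.
all: try lia.
all: try done.
  by rewrite ifT //; lia.
by congr pair; lia.
Qed.

Section Main.
Variables (T : finType) (e : rel T).
Hypothesis Hsym : symmetric e.
Hypothesis Hirr : irreflexive e.
Hypothesis Hconn : forall x y, connect e x y.
Hypothesis Hned : nedges e = #|T| - 1.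
Variable r0 : T.

Local Notation N := (cnbhd e).
Local Notation Desc := (Desc Hconn r0).
Local Notation Piece := (Piece Hconn r0).
Local Notation children := (children Hconn r0).
Local Notation par := (par Hconn r0).

Definition achF (S : {set T}) (u : T) (t : nat * nat) : Prop :=
  exists g, (t, g) \in Ftab /\ forall s b, (s, b) \in g -> Ach e S u s b.

Lemma achF_glue (S1 S2 : {set T}) u c t1 t2 :
  [disjoint S1 & S2] -> u \in S1 -> c \in S2 -> e u c ->
  {in S1, forall x, x != u -> N x \subset S1} ->
  {in S2, forall y, y != c -> N y \subset S2} ->
  N c \subset u |: S2 ->
  achF S1 u t1 -> achF S2 c t2 -> achF (S1 :|: S2) u (tagc t1 t2).
Proof.
move=> Hdis Hu Hc Huc H3 H4 H5 [g1 [m1 A1]] [g2 [m2 A2]].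
have [g [m D]] := closure m1 m2; exists g; split => // s b sb.
have /hasP [[s1 b1] p1 /hasP [[s2 b2] p2 /andP [/eqP M Hb]]] := allP D _ sb.
exact: (glue_ach Hsym Hdis Hu Hc Huc H3 H4 H5 (A1 _ _ p1) (A2 _ _ p2) M Hb).
Qed.

Lemma dp m : forall v L, #|Piece v L| <= m -> uniq L -> {subset L <= children v} ->
  achF (Piece v L) v (tagf #|Piece v L| (size L)).
Proof.
elim: m => [|m IH] v L.
  by rewrite leqn0 => /eqP/card0_eq/(_ v); rewrite inPiece eqxx.
case: L => [|y L] szP uL sL.
  rewrite Piece_nil cards1 /=; exists basel; split; first exact: base_in.
  by move=> s b sb; apply: base_ach.
have yc : y \in children v by apply: sL; rewrite inE eqxx.
have sL' : {subset L <= children v} by move=> z zL; apply: sL; rewrite inE zL orbT.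
move: uL => /= /andP [yL uL].
have yr : y != r0 by move: yc; rewrite inE => /andP [].
have py : par y = v by move: yc; rewrite inE => /andP [_ /eqP].
have vD : v \notin Desc y by rewrite -py (par_notin Hsym Hconn Hned yr).
have dis : [disjoint Piece v L & Desc y].
  apply/pred0P => w /=; rewrite inPiece; apply/negP => /andP [/orP [/eqP ->|/hasP [z zL wz]] wy].
    by rewrite wy in vD.
  have zy : z != y by apply: contraNneq yL => <-.
  have zc : z \in children (par y) by rewrite py; apply: sL'.
  have D := Desc_disj Hsym Hned zc yr zy.
  by rewrite (disjointFr D wz) in wy.
have vP : v \in Piece v L by rewrite inPiece eqxx.
have yD : y \in Desc y := Desc_self Hconn r0 y.
have evy : e v y by rewrite -py Hsym; case: (par_spec Hsym Hconn Hned yr).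
have H3 : {in Piece v L, forall x, x != v -> N x \subset Piece v L}.
  move=> x; rewrite inPiece => /orP [/eqP -> |/hasP [z zL xz]]; first by rewrite eqxx.
  move=> xv; apply/subsetP => w; rewrite inE => /orP [/eqP ->|exw].
    by rewrite inPiece; apply/orP; right; apply/hasP; exists z.
  case: (x =P z) => [xz'|/eqP xz'].
    subst x; have zc := sL' z zL; move: zc; rewrite inE => /andP [zr /eqP pz].
    case/orP: (Desc_cnbr Hsym Hirr Hconn Hned r0 exw) => [wz|/eqP ->]; last by rewrite pz.
    by rewrite inPiece; apply/orP; right; apply/hasP; exists z.
  rewrite inPiece; apply/orP; right; apply/hasP; exists z => //.
  exact: (@Desc_nbr _ _ Hsym Hirr Hconn Hned r0 z x w xz xz' exw).
have H4 : {in Desc y, forall x, x != y -> N x \subset Desc y}.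
  move=> x xD xy; apply/subsetP => w; rewrite inE => /orP [/eqP -> //|exw].
  exact: (@Desc_nbr _ _ Hsym Hirr Hconn Hned r0 y x w xD xy exw).
have H5 : N y \subset v |: Desc y.
  apply/subsetP => w; rewrite inE => /orP [/eqP ->|eyw]; first by rewrite setU1r.
  case/orP: (Desc_cnbr Hsym Hirr Hconn Hned r0 eyw) => [wD|/eqP ->]; first by rewrite setU1r.
  by rewrite py setU11.
have cP : 0 < #|Piece v L| by apply/card_gt0P; exists v.
have cD : 0 < #|Desc y| by apply/card_gt0P; exists y.
have cU := cardsU_disj' dis.
rewrite Piece_cons in szP *.
have sz1 : #|Piece v L| <= m by move: szP cD; rewrite cU; clear; lia.
have sz2 : #|Desc y| <= m by move: szP cP; rewrite cU; clear; lia.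
have A1 := IH v L sz1 uL sL'.
have A2 : achF (Desc y) y (tagf #|Desc y| #|children y|).
  rewrite [#|children y|]cardE (Desc_Piece Hsym Hconn Hned r0 y).
  apply: IH; [by rewrite -(Desc_Piece Hsym Hconn Hned r0 y) | exact: enum_uniq | by move=> z; rewrite mem_enum].
rewrite cU /= (tag_glue _ #|children y| cP cD).
exact: achF_glue dis vP yD evy H3 H4 H5 A1 A2.
Qed.

Lemma dp_root : achF setT r0 (tagf #|T| #|children r0|).
Proof.
have := @dp #|T| r0 (enum (children r0)).
rewrite -(Desc_Piece Hsym Hconn Hned r0 r0) Desc_root // -cardE cardsT.
apply => //; [exact: enum_uniq | by move=> z; rewrite mem_enum].
Qed.

Lemma sol_of_achF t : goodtag t -> achF setT r0 t ->
  exists C D, [/\ identifying e C, dominating e D & #|C| + #|D| <= #|T|].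
Proof.
move=> gt [g [m A]]; have [s [b [sb fs bl]]] := final_gen checkFin_ok m gt.
have [C [D [[sC sD domD codC disC] E K]]] := A s b sb.
move: fs; rewrite -E /finok /st => /and3P [dm kn ncl]; rewrite kind0 in kn.
exists C, D; split.
- apply/andP; split.
    apply/forallP => v; case: (v =P r0) => [->|/eqP vr] //; exact: codC (in_setT v) vr.
  apply/forallP => x; apply/forallP => y; apply/implyP => xy.
  case: (x =P r0) => [Ex|/eqP xr]; case: (y =P r0) => [Ey|/eqP yr].
  + by subst; rewrite eqxx in xy.
  + subst x; apply: contra ncl => /eqP E'; apply/existsP; exists y.
    by rewrite in_setT yr -E' eqxx.
  + subst y; apply: contra ncl => /eqP E'; apply/existsP; exists x.
    by rewrite in_setT xr E' eqxx.
  + exact: disC.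
- apply/forallP => v; case: (v =P r0) => [->|/eqP vr] //; exact: domD (in_setT v) vr.
- by move: K; rewrite cardsT; lia.
Qed.

End Main.


Section P4.
Variables (T : finType) (e : rel T).
Hypothesis Hsym : symmetric e.
Hypothesis Hirr : irreflexive e.
Hypothesis Hconn : forall x y, connect e x y.
Hypothesis Hned : nedges e = #|T| - 1.

Definition deg (v : T) : nat := #|[set w | e v w]|.

Lemma children_deg r v : v != r -> #|children Hconn r v| < deg v.
Proof.
move=> vr; have [epv dpv] := par_spec Hsym Hconn Hned vr.
have sub : par Hconn r v |: children Hconn r v \subset [set w | e v w].
  apply/subsetP => w /setU1P [->|]; first by rewrite inE.
  rewrite !inE => /andP [wr /eqP pw]; rewrite Hsym -{1}pw.
  by case: (par_spec Hsym Hconn Hned wr).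
have := subset_leq_card sub; rewrite cardsU1.
have -> : (par Hconn r v \notin children Hconn r v).
  rewrite inE negb_and; apply/orP; right; apply/negP => /eqP pp.
  have pr : par Hconn r v != r.
    apply/negP => /eqP E; rewrite E /par eqxx in pp; by rewrite -pp eqxx in vr.
  have := dep_par Hsym Hconn Hned pr; rewrite pp; lia.
rewrite /deg; lia.
Qed.

Lemma children_root r : children Hconn r r = [set w | e r w].
Proof.
apply/setP => w; rewrite !inE; apply/andP/idP => [[wr /eqP pw]|erw].
  by rewrite Hsym -{1}pw; case: (par_spec Hsym Hconn Hned wr).
have := edge_pc Hsym Hirr Hconn Hned r erw; rewrite eqxx /= => /andP [-> ->]; done.
Qed.

Hypothesis Hdeg : forall v, deg v <= 2.
Hypothesis H4 : #|T| = 4.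

Lemma leaf_exists : exists r1, deg r1 <= 1.
Proof.
have [r _] : exists r, r \in T by apply/card_gt0P; rewrite H4.
pose x := [arg max_(v > r) dep Hconn r v].
have xmax : forall y, dep Hconn r y <= dep Hconn r x.
  by rewrite /x; case: arg_maxnP => // z _ H y; apply: H.
exists x; rewrite /deg; apply: (@leq_trans #|[set par Hconn r x]|); last by rewrite cards1.
apply: subset_leq_card; apply/subsetP => y; rewrite !inE => exy.
case/orP: (edge_pc Hsym Hirr Hconn Hned r exy) => /andP [yr /eqP py].
  by rewrite -py eqxx.
have := dep_par Hsym Hconn Hned yr; rewrite py; have := xmax y; lia.
Qed.

Lemma P4_iso : iso_P4 e.
Proof.
have [r1 lf] := leaf_exists.
have ch1 v : #|children Hconn r1 v| <= 1.
  case: (v =P r1) => [->|/eqP vr]; first by rewrite children_root.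
  by have := children_deg vr; have := Hdeg v; lia.
pose d := dep Hconn r1.
have dinj : forall k x y, d x = k -> d y = k -> x = y.
  elim=> [|k IH] x y.
    by move=> /eqP dx /eqP dy; move: dx dy; rewrite /d !dep0 => /eqP -> /eqP ->.
  move=> dx dy.
  have xr : x != r1 by rewrite -(dep0 Hconn) -/d dx.
  have yr : y != r1 by rewrite -(dep0 Hconn) -/d dy.
  have px := dep_par Hsym Hconn Hned xr; have py := dep_par Hsym Hconn Hned yr.
  have pe : par Hconn r1 x = par Hconn r1 y by apply: IH; rewrite /d in dx dy *; lia.
  have xc : x \in children Hconn r1 (par Hconn r1 y) by rewrite inE xr pe eqxx.
  have yc : y \in children Hconn r1 (par Hconn r1 y) by rewrite inE yr eqxx.
  by move/card_le1_eqP: (ch1 (par Hconn r1 y)) => /(_ x y xc yc).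
have dlt x : d x < 4.
  pose g (j : 'I_(d x).+1) := iter j (par Hconn r1) x.
  have ginj : injective g.
    move=> i j gij; apply: ord_inj.
    have di : d (g i) = d x - i.
      by rewrite /g /d (dep_iter Hsym Hned) //; have := ltn_ord i; rewrite -/d; lia.
    have dj : d (g j) = d x - j.
      by rewrite /g /d (dep_iter Hsym Hned) //; have := ltn_ord j; rewrite -/d; lia.
    have := f_equal d gij; rewrite di dj; have := ltn_ord i; have := ltn_ord j; lia.
  by have := leq_card g ginj; rewrite card_ord H4.
pose f (v : T) : 'I_4 := inord (d v).
have fE v : (f v : nat) = d v by rewrite /f inordK.
have finj : injective f by move=> x y /(f_equal val); rewrite /= !fE => E; exact: dinj E erefl.
exists f; split; first by apply: inj_card_bij => //; rewrite card_ord H4.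
move=> x y; rewrite !fE; apply/idP/idP.
  move/(edge_pc Hsym Hirr Hconn Hned r1)/orP => [] /andP [r /eqP p].
    by rewrite /d -p (dep_par Hsym Hconn Hned r) eqxx orbT.
  by rewrite /d -p (dep_par Hsym Hconn Hned r) eqxx.
case/orP => /eqP E.
  have yr : y != r1 by rewrite -(dep0 Hconn) -/d -E.
  have := dep_par Hsym Hconn Hned yr; rewrite -/d -E => /eq_add_S /esym Ep.
  have := dinj _ _ _ Ep erefl => <-.
  by rewrite Hsym; case: (par_spec Hsym Hconn Hned yr).
have xr : x != r1 by rewrite -(dep0 Hconn) -/d -E.
have := dep_par Hsym Hconn Hned xr; rewrite -/d -E => /eq_add_S /esym Ep.
have := dinj _ _ _ Ep erefl => <-.
by case: (par_spec Hsym Hconn Hned xr).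
Qed.

End P4.


Theorem mainTheorem2 (T : finType) (e : rel T) :
  is_tree e -> 3 <= #|T| -> ~ iso_P4 e ->
  has_idcode e /\ gammaID e <= #|T| - gamma e.
Proof.
case=> [[Hsym Hirr] [n0 [Hconn Hned]]] n3 nP4.
have [C [D [idC domD K]]] : exists C D, [/\ identifying e C, dominating e D & #|C| + #|D| <= #|T|].
  have [r _] : exists r, r \in T by apply/card_gt0P.
  case: (ltngtP #|T| 4) => h.
  - apply: (sol_of_achF Hned _ (dp_root Hsym Hirr Hconn Hned r)).
    by have -> : #|T| = 3 by lia.
  - apply: (sol_of_achF Hned _ (dp_root Hsym Hirr Hconn Hned r)).
    by rewrite /goodtag /tagf ifT.
  - pose r0 := [arg max_(v > r) deg e v].
    have dmax : forall v, deg e v <= deg e r0.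
      by rewrite /r0; case: arg_maxnP => // z _ H v; apply: H.
    case: (leqP 3 (deg e r0)) => d3.
      apply: (sol_of_achF Hned _ (dp_root Hsym Hirr Hconn Hned r0)).
      rewrite (children_root Hsym Hirr Hconn Hned r0) -/(deg e r0) /goodtag /tagf h /=.
      by have -> : minn (deg e r0) 3 = 3 by lia.
    exfalso; apply: nP4; apply: (P4_iso Hsym Hirr Hconn Hned) => // v.
    by have := dmax v; lia.
split; first by apply/existsP; exists C.
have g1 : gammaID e <= #|C|.
  rewrite /gammaID; case: pickP => [C0 HC0|H]; last by move: (H C); rewrite idC.
  by case: arg_minnP => // C1 _; apply.
have g2 : gamma e <= #|D|.
  rewrite /gamma; case: arg_minnP => [|D1 _]; last by apply.
  by apply/forallP => v; apply/set0Pn; exists v; rewrite !inE eqxx.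
lia.
Qed.
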